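(* Let $\mathcal{Q}\subseteq 2^E$ ($E$ finite) be a simplicial complex (a nonempty family closed under taking subsets). If $\mathcal{Q}$ is weakly Rayleigh then $\mathcal{Q}$ is the set of independent sets of a matroid on $E$.
   Context: For $\omega:2^E\to[0,\infty)$ not identically zero, $Z(\omega;\mathbf{y})=\sum_S\omega(S)\prod_{e\in S}y_e$; with subscripts denoting partial derivatives, $Z$ is Rayleigh if $Z_eZ_f-Z_{ef}Z\ge0$ for all distinct $e,f$ and all positive $\mathbf{y}$. $\mathcal{Q}$ is weakly Rayleigh if some $\omega\ge0$ with $\{S:\omega(S)>0\}=\mathcal{Q}$ has $Z(\omega;\mathbf{y})$ Rayleigh. *)

(* Defs.v *)
From HB Require Import structures.
From mathcomp Require Import all_boot all_order all_algebra.
From mathcomp Require Import reals.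
From mathcomp Require Import mpoly.
Set Implicit Arguments. Unset Strict Implicit. Unset Printing Implicit Defensive.
Import Order.TTheory GRing.Theory Num.Theory.
Local Open Scope ring_scope.

(* The ground set E is modelled as 'I_n. Families of subsets of E are
   elements of {set {set 'I_n}}. *)

Definition simplicial_complex (n : nat) (Q : {set {set 'I_n}}) : Prop :=
  Q != set0 /\ (forall S T : {set 'I_n}, S \in Q -> T \subset S -> T \in Q).

Definition is_matroid_indep (n : nat) (Q : {set {set 'I_n}}) : Prop :=
  [/\ set0 \in Q,
      (forall S T : {set 'I_n}, S \in Q -> T \subset S -> T \in Q) &
      (forall I J : {set 'I_n}, I \in Q -> J \in Q -> #|I| < #|J| ->
         exists2 e, e \in J :\: I & e |: I \in Q)]%N.

Definition genpoly (R : realType) (n : nat) (omega : {set 'I_n} -> R)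
  : {mpoly R[n]} :=
  \sum_(S : {set 'I_n}) omega S *: \prod_(e in S) 'X_e.

Definition rayleigh (R : realType) (n : nat) (Z : {mpoly R[n]}) : Prop :=
  forall e f : 'I_n, e != f ->
  forall y : 'I_n -> R, (forall i, 0 < y i) ->
    0 <= (Z^`M(e)).@[y] * (Z^`M(f)).@[y] - ((Z^`M(e))^`M(f)).@[y] * Z.@[y].

Definition weakly_rayleigh (R : realType) (n : nat) (Q : {set {set 'I_n}})
  : Prop :=
  exists omega : {set 'I_n} -> R,
    [/\ (forall S, 0 <= omega S),
        (exists S, omega S != 0),
        (forall S, (0 < omega S) <-> (S \in Q)) &
        rayleigh (genpoly omega)].

(* Main.v *)
Require Import Defs.
From HB Require Import structures.
From mathcomp Require Import all_boot all_order all_algebra.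
From mathcomp Require Import reals.
From mathcomp Require Import mpoly.
From mathcomp Require Import ring.
Set Implicit Arguments. Unset Strict Implicit. Unset Printing Implicit Defensive.
Import Order.TTheory GRing.Theory Num.Theory.
Local Open Scope ring_scope.

Section Anal.
Variables (R : realType) (n : nat).

Lemma dX (i e : 'I_n) : ('X_i : {mpoly R[n]})^`M(e) = (i == e)%:R.
Proof.
rewrite mderivX mnm1E; case: eqP => [->|_]; last by rewrite scale0r.
have -> : (U_(e) - U_(e) = 0)%MM by apply/mnmP=> j; rewrite mnmBE subnn mnm0E.
by rewrite mpolyX0 scale1r.
Qed.

Lemma dprod0 (X : {set 'I_n}) e : e \notin X ->
  (\prod_(i in X) 'X_i : {mpoly R[n]})^`M(e) = 0.
Proof.
move=> eX; elim/big_rec: _ => [|i p iX Hp]; first by rewrite -mpolyC1 mderivC.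
rewrite mderivM Hp dX; have -> : (i == e) = false.
  by apply/negbTE; apply: contraNneq eX => <-.
by rewrite mul0r mulr0 addr0.
Qed.

Lemma dprod (X : {set 'I_n}) e :
  (\prod_(i in X) 'X_i : {mpoly R[n]})^`M(e) =
  if e \in X then \prod_(i in X :\ e) 'X_i else 0.
Proof.
case: ifP => eX; last by apply: dprod0; rewrite eX.
rewrite (bigD1 e) //= mderivM dX eqxx mul1r.
rewrite (eq_bigl (mem (X :\ e))); last by move=> i; rewrite !inE andbC.
by rewrite dprod0 ?mulr0 ?addr0 // !inE eqxx.
Qed.

Lemma evprod (X : {set 'I_n}) (y : 'I_n -> R) :
  (\prod_(i in X) 'X_i : {mpoly R[n]}).@[y] = \prod_(i in X) y i.
Proof.
rewrite (big_morph _ (mevalM y) (meval1 y)); apply: eq_bigr => i _.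
by rewrite mevalXU.
Qed.

Lemma dif0 (b : bool) (p : {mpoly R[n]}) f :
  (if b then p else 0)^`M(f) = if b then p^`M(f) else 0.
Proof. by case: b; rewrite ?mderiv0. Qed.

Lemma ev_gen (omega : {set 'I_n} -> R) y :
  (genpoly omega).@[y] = \sum_S omega S * \prod_(i in S) y i.
Proof.
rewrite /genpoly raddf_sum; apply: eq_bigr => S _ /=.

by rewrite mevalZ evprod.
Qed.

Lemma ev_gen1 (omega : {set 'I_n} -> R) y e :
  ((genpoly omega)^`M(e)).@[y] =
  \sum_S omega S * (if e \in S then \prod_(i in S :\ e) y i else 0).
Proof.
rewrite /genpoly (raddf_sum (mderiv e)) raddf_sum; apply: eq_bigr => S _ /=.
rewrite mderivZ mevalZ dprod; case: ifP => _; last by rewrite meval0.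
by rewrite evprod.
Qed.

Lemma ev_gen2 (omega : {set 'I_n} -> R) y e f :
  ((genpoly omega)^`M(e)^`M(f)).@[y] =
  \sum_S omega S * (if e \in S then (if f \in S :\ e then
       \prod_(i in S :\ e :\ f) y i else 0) else 0).
Proof.
rewrite /genpoly (raddf_sum (mderiv e)) (raddf_sum (mderiv f)) raddf_sum; apply: eq_bigr => S _ /=.
rewrite !mderivZ mevalZ dprod dif0 dprod; case: ifP => _; last by rewrite meval0.
case: ifP => _; last by rewrite meval0.
by rewrite evprod.
Qed.


Lemma prod_t (I X : {set 'I_n}) (t : R) :
  \prod_(i in X) (if i \in I then t else 1) = t ^+ #|X :&: I|.
Proof.
rewrite -big_mkcondr -prodr_const; apply: eq_bigl => i; by rewrite !inE.
Qed.

Lemma no_config (Q : {set {set 'I_n}}) (omega : {set 'I_n} -> R)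
  (hge : forall S, 0 <= omega S) (hQ : forall S, 0 < omega S <-> S \in Q)
  (hcl : forall S T : {set 'I_n}, S \in Q -> T \subset S -> T \in Q)
  (I : {set 'I_n}) (a e f : 'I_n) :
  I \in Q -> a \in I -> e \notin I -> f \notin I -> e != f ->
  e |: (f |: (I :\ a)) \in Q -> e |: I \notin Q -> f |: I \notin Q ->
  ~ rayleigh (genpoly omega).
Proof.
move=> IQ aI eI fI nef TQ eIQ fIQ Hr.
set T := e |: (f |: (I :\ a)).
set m := #|I|.
set W := \sum_S omega S.
have hW : 0 <= W by apply: sumr_ge0.
have wI : 0 < omega I by apply/hQ.
have wT : 0 < omega T by apply/hQ.
set c := omega T * omega I.
have c0 : 0 < c by apply: mulr_gt0.
set t := W ^+ 2 / c + 1.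
have t1 : 1 <= t by rewrite /t lerDr; apply: divr_ge0 (exprn_ge0 _ hW) (ltW c0).
have t0 : 0 < t by apply: lt_le_trans t1; exact: ltr01.
pose y := fun i => if i \in I then t else 1.
have ypos : forall i, 0 < y i by move=> i; rewrite /y; case: ifP.
have Py : forall X : {set 'I_n}, \prod_(i in X) y i = t ^+ #|X :&: I| by move=> X; exact: prod_t.
have m0 : (0 < m)%N by rewrite /m card_gt0; apply/set0Pn; exists a.
set u := t ^+ m.-1.
have u0 : 0 < u by exact: exprn_gt0.
have tm : t ^+ m = u * t by rewrite /u -exprSr prednK.
have w0 : forall S, S \notin Q -> omega S = 0.
  move=> S SQ; apply/eqP; rewrite eq_le hge andbT leNgt; apply/negP => /hQ.
  by apply/negP.
have up : forall x, x \notin I -> x |: I \notin Q ->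
   0 <= \sum_S omega S * (if x \in S then \prod_(i in S :\ x) y i else 0) <= W * u.
  move=> x xI xIQ; apply/andP; split.
    apply: sumr_ge0 => S _; apply: mulr_ge0 => //; case: ifP => _ //.
    by rewrite Py; exact: exprn_ge0 (ltW t0).
  rewrite /W mulr_suml; apply: ler_sum => S _.
  have [SQ|SQ] := boolP (S \in Q); last by rewrite w0 // !mul0r.
  apply: (ler_wpM2l (hge S)).
  case: ifP => xS; last exact: ltW u0.
  rewrite Py /u; apply: (ler_weXn2l t1).
  rewrite -ltnS prednK // ltnNge; apply/negP => hle.
  have eqI : (S :\ x) :&: I == I by rewrite eqEcard subsetIr hle.
  move/negP: xIQ; apply; apply: hcl SQ _.
  rewrite subUset sub1set xS /= -(eqP eqI).
  exact: subset_trans (subsetIl _ _) (subD1set _ _).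
have lo2 : omega T * u <= \sum_S omega S * (if e \in S then (if f \in S :\ e then
       \prod_(i in S :\ e :\ f) y i else 0) else 0).
  rewrite (bigD1 T) //=.
  have hT : T :\ e :\ f = I :\ a.
    apply/setP => x; rewrite !inE.
    case: (eqVneq x f) => [->|xf]; first by rewrite (negbTE fI) andbF.
    case: (eqVneq x e) => [->|xe]; first by rewrite (negbTE eI) andbF.
    by [].
  have -> : e \in T by rewrite !inE eqxx.
  have -> : f \in T :\ e by rewrite !inE eqxx eq_sym nef orbT.
  rewrite hT Py (setIidPl (subD1set _ _)).
  have -> : #|I :\ a| = m.-1 by rewrite /m (cardsD1 a I) aI.
  rewrite lerDl; apply: sumr_ge0 => S _; apply: mulr_ge0 => //.
  case: ifP => _ //; case: ifP => _ //.
  by rewrite Py; exact: exprn_ge0 (ltW t0).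
have lo1 : omega I * (u * t) <= \sum_S omega S * \prod_(i in S) y i.
  rewrite (bigD1 I) //= Py setIid -tm lerDl.
  apply: sumr_ge0 => S _; apply: mulr_ge0 => //.
  by rewrite Py; exact: exprn_ge0 (ltW t0).
have := Hr e f nef y ypos.
rewrite ev_gen1 ev_gen1 ev_gen2 ev_gen.
case/andP: (up e eI eIQ) => Ze0 Ze1.
case/andP: (up f fI fIQ) => Zf0 Zf1.
have P1 := ler_pM Ze0 Zf0 Ze1 Zf1.
have P2 := ler_pM (mulr_ge0 (ltW wT) (ltW u0)) (mulr_ge0 (ltW wI) (mulr_ge0 (ltW u0) (ltW t0))) lo2 lo1.
have P3 := lerB P1 P2.
move=> P4; have P5 := le_trans P4 P3.
have ct : c * t = W ^+ 2 + c.
  by rewrite /t mulrDr mulr1 mulrC divfK // gt_eqF.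
have key : W * u * (W * u) - omega T * u * (omega I * (u * t)) = - (c * (u * u)).
  have -> : W * u * (W * u) - omega T * u * (omega I * (u * t)) = u * u * (W ^+ 2 - c * t).
    by rewrite /c; ring.
  by rewrite ct; ring.
rewrite key oppr_ge0 in P5.
have : 0 < c * (u * u) by apply: mulr_gt0 => //; apply: mulr_gt0.
by rewrite ltNge P5.
Qed.

End Anal.

Definition config (n : nat) (Q : {set {set 'I_n}}) I (a e f : 'I_n) :=
  [/\ I \in Q, a \in I, e \notin I, f \notin I &
   [/\ e != f, e |: (f |: (I :\ a)) \in Q, e |: I \notin Q & f |: I \notin Q]].

Lemma find_config (n : nat) (Q : {set {set 'I_n}})
  (hcl : forall S T : {set 'I_n}, S \in Q -> T \subset S -> T \in Q) :
  forall k (I J : {set 'I_n}), (#|I :\: J| <= k)%N -> I \in Q -> J \in Q ->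
  (#|I| < #|J|)%N -> (forall x, x \in J :\: I -> x |: I \notin Q) ->
  exists I0 a e f, config Q I0 a e f.
Proof.
elim=> [|k IH] I J hk IQ JQ hlt hbad.
all: have [b bJI] : exists b, b \in J :\: I.
1,3: apply/set0Pn; apply/negP; rewrite setD_eq0 => /subset_leq_card;
     by rewrite leqNgt hlt.
all: have noIJ : I :\: J != set0.
1,3: apply/negP; rewrite setD_eq0 => IJ; apply: (negP (hbad b bJI));
     apply: hcl JQ _; rewrite subUset sub1set IJ andbT; by case/setDP: bJI.
  by move: hk; rewrite leqn0 cards_eq0 (negbTE noIJ).
case/set0Pn: noIJ => a /setDP [aI aJ].
case/setDP: bJI => bJ bI.
have cI : #|I| = (#|I :\ a|).+1 by rewrite (cardsD1 a I) aI.
case: (boolP [exists b, (b \in J :\: I) && (b |: (I :\ a) \in Q)]).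
- move/existsP => [b' /andP [/setDP [b'J b'I] I'Q]].
  set I' := b' |: (I :\ a).
  case: (boolP [exists x, (x \in J :\: I') && (x |: I' \in Q)]).
  + move/existsP => [x /andP [/setDP [xJ xI'] xI'Q]].
    have xI : x \notin I.
      apply/negP => xI; move: xI'; rewrite !inE xI andbT negb_or negbK.
      by case/andP => _ /eqP xa; rewrite -xa xJ in aJ.
    have xb : x != b'.
      by apply: contraNneq xI' => ->; rewrite !inE eqxx.
    exists I, a, x, b'; split => //; split => //.
    * by apply: hbad; rewrite inE xI xJ.
    * by apply: hbad; rewrite inE b'I b'J.
  + move/existsPn => H.
    apply: (IH I' J) => //.
    * rewrite -ltnS; apply: leq_trans hk; apply: proper_card.
      apply/properP; split.
        apply/subsetP => x; rewrite !inE => /andP [xJ /orP [/eqP xb | /andP [_ xI]]].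
          by rewrite xb b'J in xJ.
        by rewrite xJ xI.
      exists a; first by rewrite inE aI aJ.
      rewrite !inE eqxx aJ /= orbF; apply/eqP => ab.
      by rewrite ab b'J in aJ.
    * rewrite /I' cardsU1 !inE (negbTE b'I) andbF /= add1n -cI //. 
    * move=> x xJI'; move: (H x); by rewrite xJI' /=.
- move/existsPn => H.
  have cJ : #|J| = (#|J :\ b|).+1 by rewrite (cardsD1 b J) bJ.
  apply: (IH (I :\ a) (J :\ b)).
  * rewrite -ltnS; apply: leq_trans hk; apply: proper_card.
    apply/properP; split.
      apply/subsetP => x; rewrite !inE => /and3P [/negP xJb _ xI].
      rewrite xI andbT; apply/negP => xJ; apply: xJb; rewrite xJ andbT.
      by apply: contraNneq bI => <-.
    exists a; first by rewrite inE aI aJ.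
    by rewrite !inE eqxx /= andbF.
  * by apply: (hcl _ _ IQ); exact: subD1set.
  * by apply: (hcl _ _ JQ); exact: subD1set.
  * by move: hlt; rewrite cI cJ ltnS.
  * move=> x /setDP [/setD1P [_ xJ] xIa].
    have xI' : x \notin I.
      apply/negP => xI'; move: xIa; rewrite !inE xI' andbT negbK => /eqP xa.
      by rewrite -xa xJ in aJ.
    by move: (H x); rewrite !inE xI' xJ.
Qed.

Theorem corollary4p10 (R : realType) (n : nat) (Q : {set {set 'I_n}}) :
  simplicial_complex Q -> weakly_rayleigh R Q -> is_matroid_indep Q.
Proof.
move=> [Qne hcl] [omega [hge _ hQ Hr]].
split => //.
- case/set0Pn: Qne => S SQ; apply: hcl SQ _; exact: sub0set.
- move=> I J IQ JQ hlt.
  case: (boolP [exists x, (x \in J :\: I) && (x |: I \in Q)]).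
    by move/existsP => [x /andP [? ?]]; exists x.
  move/existsPn => H; exfalso.
  have [|I0 [a [e [f [I0Q aI eI fI [nef TQ eIQ fIQ]]]]]] :=
    @find_config n Q hcl _ I J (leqnn _) IQ JQ hlt.
    by move=> x xJI; move: (H x); rewrite xJI.
  exact: (no_config hge hQ hcl I0Q aI eI fI nef TQ eIQ fIQ Hr).
Qed.
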